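(* The function $f:(0,\infty)\to\mathbb{R}$, $f(x)=\sin(\log x)$, is amenable.
   Context: Relative distance on $\mathbb{R}$: $\mathrm{dist}(x,y)=0$ if $x=y=0$, $\mathrm{dist}(x,y)=|\log(y/x)|$ if $xy>0$, and $\mathrm{dist}(x,y)=\infty$ otherwise. For a real analytic function $f$ on an open set $\Omega\subseteq\mathbb{R}$, not identically zero, the condition number is $\kappa(f,x)=0$ if $x=0$, $\kappa(f,x)=\infty$ if $x\neq0$ and $f(x)=0$, and $\kappa(f,x)=|x|\,|f'(x)|/|f(x)|$ otherwise; $\mu(f,x)=1+\kappa(f,x)$. $f:\Omega\to\mathbb{R}$ is amenable if there is $C>0$ such that for every $x\in\Omega$ with $\kappa(f,x)<\infty$, the set $B_x=\{y\in\mathbb{R}:\mathrm{dist}(y,x)<1/(C\mu(f,x))\}$ is contained in $\Omega$ and $\mu(f,y)\leq C\mu(f,x)$ for all $y\in B_x$. *)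

(* Defs.v *)
From Stdlib Require Import Reals.
From Coquelicot Require Import Coquelicot.
Open Scope R_scope.

Definition reldist (x y : R) : Rbar :=
  if Req_EM_T x 0 then
    (if Req_EM_T y 0 then Finite 0 else p_infty)
  else if Rlt_dec 0 (x * y) then Finite (Rabs (ln (y / x)))
  else p_infty.

Definition kappa (f : R -> R) (x : R) : Rbar :=
  if Req_EM_T x 0 then Finite 0
  else if Req_EM_T (f x) 0 then p_infty
  else Finite (Rabs x * Rabs (Derive f x) / Rabs (f x)).

Definition mu (f : R -> R) (x : R) : Rbar := Rbar_plus (Finite 1) (kappa f x).

(* f : Omega -> R is amenable.  When kappa(f,x) < oo, mu(f,x) is finite, so
   real (mu f x) is its value. *)
Definition amenable (Omega : R -> Prop) (f : R -> R) : Prop :=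
  exists C : R, 0 < C /\
    forall x : R, Omega x -> Rbar_lt (kappa f x) p_infty ->
      (forall y : R, Rbar_lt (reldist y x) (Finite (1 / (C * real (mu f x)))) ->
         Omega y) /\
      (forall y : R, Rbar_lt (reldist y x) (Finite (1 / (C * real (mu f x)))) ->
         Rbar_le (mu f y) (Finite (C * real (mu f x)))).

(* Main.v *)
Require Import Defs.
From Stdlib Require Import Reals Lra Psatz.
From Coquelicot Require Import Coquelicot.
Open Scope R_scope.

Lemma sin_abs_le_pos u : 0 < u -> Rabs (sin u) <= u.
Proof.
  intros Hu. pose proof (sin_lt_x u Hu). pose proof (SIN_bound u).
  destruct (Rlt_le_dec u 1).
  - assert (0 < sin u) by (apply sin_pos_tech; lra).
    rewrite Rabs_pos_eq; lra.
  - apply Rabs_le; lra.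
Qed.

Lemma sin_abs_le u : Rabs (sin u) <= Rabs u.
Proof.
  destruct (Rtotal_order u 0) as [H|[H|H]].
  - assert (E : sin u = - sin (- u)) by (rewrite sin_neg; ring).
    rewrite E, Rabs_Ropp, (Rabs_left u) by lra.
    apply sin_abs_le_pos; lra.
  - subst. rewrite sin_0. lra.
  - rewrite (Rabs_pos_eq u) by lra. now apply sin_abs_le_pos.
Qed.

Lemma sin_lip a b : Rabs (sin a - sin b) <= Rabs (a - b).
Proof.
  rewrite form4, !Rabs_mult.
  pose proof (sin_abs_le ((a - b) / 2)).
  pose proof (COS_bound ((a + b) / 2)).
  assert (Rabs (cos ((a + b) / 2)) <= 1) by (apply Rabs_le; lra).
  assert (Rabs ((a - b) / 2) = Rabs (a - b) / 2).
  { unfold Rdiv. rewrite Rabs_mult, (Rabs_pos_eq (/2)) by lra. reflexivity. }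
  rewrite (Rabs_pos_eq 2) by lra.
  pose proof (Rabs_pos (sin ((a - b) / 2))).
  pose proof (Rabs_pos (cos ((a + b) / 2))).
  nra.
Qed.

Lemma derive_f x : 0 < x -> Derive (fun x => sin (ln x)) x = cos (ln x) / x.
Proof.
  intros Hx. apply is_derive_unique. auto_derive; [lra|]. field. lra.
Qed.

Lemma kappa_f x : 0 < x -> sin (ln x) <> 0 ->
  kappa (fun x => sin (ln x)) x = Finite (Rabs (cos (ln x)) / Rabs (sin (ln x))).
Proof.
  intros Hx Hs. unfold kappa.
  destruct (Req_EM_T x 0); [lra|].
  destruct (Req_EM_T (sin (ln x)) 0); [contradiction|].
  rewrite derive_f by auto. f_equal.
  unfold Rdiv. rewrite Rabs_mult, Rabs_inv, (Rabs_pos_eq x) by lra.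
  field. split; [apply Rabs_no_R0; auto | lra].
Qed.

Theorem mainTheorem13 :
  amenable (fun x : R => 0 < x) (fun x : R => sin (ln x)).
Proof.
  exists 3. split; [lra|].
  intros x Hx Hk.
  assert (Hs : sin (ln x) <> 0).
  { intro E. unfold kappa in Hk. destruct (Req_EM_T x 0); [lra|].
    destruct (Req_EM_T (sin (ln x)) 0); [simpl in Hk; contradiction| contradiction]. }
  set (t := ln x) in *.
  set (a := Rabs (sin t)). set (c := Rabs (cos t)).
  assert (Ha : 0 < a) by (apply Rabs_pos_lt; auto).
  assert (Hc : 0 <= c) by apply Rabs_pos.
  assert (Ha1 : a <= 1) by (apply Rabs_le; pose proof (SIN_bound t); lra).
  assert (Hc1 : c <= 1) by (apply Rabs_le; pose proof (COS_bound t); lra).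
  assert (Hac : a + c >= 1).
  { pose proof (sin2_cos2 t). unfold Rsqr in *.
    assert (a * a = sin t * sin t) by (unfold a; rewrite <- Rabs_mult; apply Rabs_pos_eq; nra).
    assert (c * c = cos t * cos t) by (unfold c; rewrite <- Rabs_mult; apply Rabs_pos_eq; nra).
    nra. }
  assert (Hmu : real (mu (fun x => sin (ln x)) x) = 1 + c / a).
  { unfold mu. rewrite kappa_f by auto. reflexivity. }
  rewrite Hmu.
  assert (Hm1 : 1 + c / a >= 1 / a).
  { apply Rle_ge. unfold Rdiv. apply (Rmult_le_reg_r a); [auto|].
    field_simplify; lra. }
  assert (Hpos : 0 < 1 + c / a) by (assert (0 <= c / a) by (apply Rdiv_le_0_compat; lra); lra).
  assert (Key : forall y, Rbar_lt (reldist y x) (Finite (1 / (3 * (1 + c / a)))) ->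
     0 < y /\ Rabs (ln y - t) < a / 3).
  { intros y Hy. unfold reldist in Hy.
    destruct (Req_EM_T y 0).
    - destruct (Req_EM_T x 0); simpl in Hy; [lra|contradiction].
    - destruct (Rlt_dec 0 (y * x)); [|simpl in Hy; contradiction].
      simpl in Hy.
      assert (0 < y) by nra. split; auto.
      rewrite ln_div in Hy by lra. fold t in Hy.
      rewrite Rabs_minus_sym.
      eapply Rlt_le_trans; [exact Hy|].
      unfold Rdiv. rewrite Rmult_1_l.
      apply (Rmult_le_reg_r (3 * (1 + c * / a))); [lra|].
      rewrite Rinv_l by lra.
      replace (a * / 3 * (3 * (1 + c * / a))) with (a + c) by (field; lra).
      lra. }
  split.
  - intros y Hy. apply (Key y Hy).
  - intros y Hy. destruct (Key y Hy) as [Hy0 Hd].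
    set (s := ln y) in *.
    pose proof (sin_lip s t).
    assert (Hsb : Rabs (sin s) >= 2 * a / 3).
    { pose proof (Rabs_triang_inv (sin t) (sin s)).
      rewrite Rabs_minus_sym in H. fold a in H0. lra. }
    assert (Hs' : sin s <> 0).
    { intro E. rewrite E, Rabs_R0 in Hsb. lra. }
    unfold mu. rewrite kappa_f by auto. simpl.
    assert (Rabs (cos s) <= 1) by (apply Rabs_le; pose proof (COS_bound s); lra).
    assert (Rabs (cos s) / Rabs (sin s) <= 3 / (2 * a)).
    { apply (Rmult_le_reg_r (Rabs (sin s))); [lra|].
      unfold Rdiv. rewrite Rmult_assoc, Rinv_l by lra.
      apply (Rmult_le_reg_r (2 * a)); [lra|].
      replace (3 * / (2 * a) * Rabs (sin s) * (2 * a)) with (3 * Rabs (sin s)) by (field; lra).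
      nra. }
    assert (3 / (2 * a) = (3/2) * (1 / a)) by (field; lra).
    fold s. assert (0 <= c / a) by (apply Rdiv_le_0_compat; lra). lra.
Qed.
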